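(* Let $\mathcal{V}$ be a finite vocabulary, $L\ge 1$, $\mathbf{m}\notin\mathcal{V}$ a mask token, $\mathcal{Z}:=(\mathcal{V}\cup\{\mathbf{m}\})^L$, and $p_{\mathrm{data}}$ a probability distribution on $\mathcal{V}^L$. Fix an integer $K\ge 1$ and the time grid $t_j:=1-j/K$, $j=0,1,\dots,K$. Let $g_\phi$ be an unmasking policy, i.e. for each $\mathbf{z}\in\mathcal{Z}$ and time $t$, $g_\phi(\cdot\mid\mathbf{z},t)$ is a probability distribution on the masked index set $\mathrm{msk}(\mathbf{z})$. Consider two Markov chains on $\mathcal{Z}$, both started at the fully masked state $(\mathbf{m},\dots,\mathbf{m})$: (1) Idealized inference chain: given $\mathbf{z}_{t_j}$, sample $I_j\sim g_\phi(\cdot\mid\mathbf{z}_{t_j},t_j)$, then sample $V_j\sim p(\mathbf{x}_0^{I_j}=\cdot\mid\mathbf{z}_{t_j})$, and set $\mathbf{z}_{t_{j+1}}:=\mathbf{z}_{t_j}^{(I_j\leftarrow V_j)}$. Let $q_{t_j}$ be the law of $\mathbf{z}_{t_j}$. (2) Teacher-forced chain: first sample $\mathbf{x}_0\sim p_{\mathrm{data}}$ and set $\tilde{\mathbf{z}}_{t_0}=(\mathbf{m},\dots,\mathbf{m})$; given $\tilde{\mathbf{z}}_{t_j}$, sample $I_j\sim g_\phi(\cdot\mid\tilde{\mathbf{z}}_{t_j},t_j)$ and set $\tilde{\mathbf{z}}_{t_{j+1}}:=\tilde{\mathbf{z}}_{t_j}^{(I_j\leftarrow \mathbf{x}_0^{I_j})}$.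 Let $\tilde q_{t_j}$ be the marginal law of $\tilde{\mathbf{z}}_{t_j}$ (after integrating over $\mathbf{x}_0\sim p_{\mathrm{data}}$). Then $q_{t_j}=\tilde q_{t_j}$ for every $j\in\{0,1,\dots,K\}$.
   Context: For $\mathbf{z}\in\mathcal{Z}$, $\mathrm{um}(\mathbf{z}):=\{i\in[L]:\mathbf{z}^i\neq\mathbf{m}\}$ and $\mathrm{msk}(\mathbf{z}):=[L]\setminus\mathrm{um}(\mathbf{z})$. For $i\in[L]$, $v\in\mathcal{V}$, $\mathbf{z}^{(i\leftarrow v)}$ denotes $\mathbf{z}$ with its $i$-th entry replaced by $v$. For $\mathbf{x}_0\sim p_{\mathrm{data}}$, $\mathbf{z}\in\mathcal{Z}$ and $i\in\mathrm{msk}(\mathbf{z})$, the ground-truth unmasking posterior is $p(\mathbf{x}_0^i=v\mid\mathbf{z}):=\mathbb{P}(\mathbf{x}_0^i=v\mid \mathbf{x}_0^{\mathrm{um}(\mathbf{z})}=\mathbf{z}^{\mathrm{um}(\mathbf{z})})$ (for states $\mathbf{z}$ reached with positive probability). The policy $g_\phi$ depends only on the current (partially masked) state and time, not on any hidden clean tokens. *)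

(* Defs.v *)
From mathcomp Require Import all_boot all_order all_algebra.
Set Implicit Arguments. Unset Strict Implicit. Unset Printing Implicit Defensive.
Import Order.TTheory GRing.Theory Num.Theory.
Local Open Scope ring_scope.

Section MDM.
Variables (R : realFieldType) (V : finType) (L : nat).

(* Partially masked states: None is the mask token m. *)
Definition state := {ffun 'I_L -> option V}.
Definition clean := {ffun 'I_L -> V}.

Definition full_mask : state := [ffun _ => None].

Definition replace (z : state) (i : 'I_L) (v : V) : state :=
  [ffun k => if k == i then Some v else z k].

Definition masked (z : state) (i : 'I_L) : bool := z i == None.

Definition consistent (z : state) (x : clean) : bool :=
  [forall k, if z k is Some a then x k == a else true].

Definition is_distribution (p : {ffun clean -> R}) : Prop :=
  (forall x, 0 <= p x) /\ \sum_x p x = 1.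

Definition is_policy (g : state -> R -> 'I_L -> R) : Prop :=
  forall z t, (exists i, masked z i) ->
    [/\ forall i, 0 <= g z t i,
        forall i, ~~ masked z i -> g z t i = 0
      & \sum_i g z t i = 1].

(* ground-truth unmasking posterior p(x0^i = v | z) (0 on null events) *)
Definition posterior (p : {ffun clean -> R}) (z : state) (i : 'I_L) (v : V) : R :=
  (\sum_(x | consistent z x && (x i == v)) p x) / (\sum_(x | consistent z x) p x).

Definition tgrid (K j : nat) : R := 1 - j%:R / K%:R.

Fixpoint q_ideal (p : {ffun clean -> R}) (g : state -> R -> 'I_L -> R)
    (K j : nat) : state -> R :=
  match j with
  | 0 => fun z => if z == full_mask then 1 else 0
  | j'.+1 => fun z' =>
      \sum_z q_ideal p g K j' z *
        \sum_i g z (tgrid K j') i *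
          \sum_v posterior p z i v * (if z' == replace z i v then 1 else 0)
  end.

Fixpoint q_tf_joint (p : {ffun clean -> R}) (g : state -> R -> 'I_L -> R)
    (K j : nat) : clean -> state -> R :=
  match j with
  | 0 => fun x z => p x * (if z == full_mask then 1 else 0)
  | j'.+1 => fun x z' =>
      \sum_z q_tf_joint p g K j' x z *
        \sum_i g z (tgrid K j') i * (if z' == replace z i (x i) then 1 else 0)
  end.

Definition q_tf p g K j (z : state) : R := \sum_x q_tf_joint p g K j x z.

End MDM.

(* Main.v *)
Require Import Defs.
From mathcomp Require Import all_boot all_order all_algebra.
From mathcomp Require Import ring.
Import Order.TTheory GRing.Theory Num.Theory.
Local Open Scope ring_scope.

Section Proof.
Variables (R : realFieldType) (V : finType) (L : nat).
Variables (p : {ffun clean V L -> R}) (g : state V L -> R -> 'I_L -> R) (K : nat).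

Definition compat (o : option V) (v : V) : bool :=
  if o is Some a then v == a else true.

Fixpoint w (j : nat) : state V L -> R :=
  match j with
  | 0 => fun z => if z == full_mask V L then 1 else 0
  | j'.+1 => fun z' =>
      \sum_z w j' z * \sum_i g z (tgrid R K j') i *
        \sum_v (if (z' == replace z i v) && compat (z i) v then 1 else 0)
  end.

Definition S (z : state V L) : R := \sum_(x | consistent z x) p x.

Lemma consF (z : state V L) (x : clean V L) i v :
  consistent z x && (x i == v) = compat (z i) v && consistent (replace z i v) x.
Proof.
apply/idP/idP.
- case/andP => /forallP H /eqP <-; apply/andP; split; first exact: H i.
  apply/forallP => k; rewrite ffunE; case: eqP => [->|_]; first by rewrite eqxx.
  exact: H k.
- case/andP => Hc /forallP H.
  have Hi := H i; rewrite ffunE eqxx in Hi.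
  rewrite Hi andbT; apply/forallP => k.
  case: (k =P i) => [->|ne].
  + move: Hc; rewrite /compat (eqP Hi); case: (z i) => // a /eqP ->; exact: eqxx.
  + by have := H k; rewrite ffunE (introF eqP ne).
Qed.

Lemma cons_full x : consistent (full_mask V L) x.
Proof. by apply/forallP => k; rewrite ffunE. Qed.

Lemma consG {z z' : state V L} {x i v} :
  consistent z' x -> z' == replace z i v -> x i == v.
Proof.
move=> /forallP /(_ i) Hc /eqP Ez; move: Hc; by rewrite Ez ffunE eqxx.
Qed.

Lemma indE (z z' : state V L) x i :
  (if consistent z x then 1 else 0) * (if z' == replace z i (x i) then 1 else 0)
  = (if consistent z' x then 1 else 0) *
    \sum_v (if (z' == replace z i v) && compat (z i) v then 1 else 0) :> R.
Proof.
case Hc': (consistent z' x).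
- rewrite mul1r (bigD1 (x i)) //= big1 ?addr0; last first.
    move=> v ne; case E: (z' == replace z i v) => //=.
    by move: (consG Hc' E : x i == v); rewrite eq_sym (negbTE ne).
  case E1: (z' == replace z i (x i)); last by rewrite mulr0.
  have := consF z x i (x i); rewrite eqxx andbT -(eqP E1) Hc' andbT => ->.
  by rewrite mulr1.
- rewrite mul0r; case Hc: (consistent z x); last by rewrite mul0r.
  case E1: (z' == replace z i (x i)); last by rewrite mulr0.
  have := consF z x i (x i); rewrite eqxx Hc -(eqP E1) Hc' andbF //.
Qed.

Lemma numE (z : state V L) i v :
  \sum_(x | consistent z x && (x i == v)) p x
  = (if compat (z i) v then 1 else 0) * S (replace z i v).
Proof.
rewrite (eq_bigl (fun x => compat (z i) v && consistent (replace z i v) x));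
  last by move=> x; rewrite consF.
case: (compat (z i) v); first by rewrite mul1r.
by rewrite mul0r big_pred0.
Qed.

Lemma postE (z : state V L) i v : (forall x, 0 <= p x) ->
  S z * posterior p z i v = (if compat (z i) v then 1 else 0) * S (replace z i v).
Proof.
move=> p0; rewrite -numE /posterior -/(S z).
case: (eqVneq (S z) 0) => [S0|Sn0]; last by rewrite mulrC divfK.
rewrite S0 mul0r; apply/esym/eqP; rewrite eq_le sumr_ge0 ?andbT //.
have: S z = \sum_(x | consistent z x && (x i == v)) p x +
            \sum_(x | consistent z x && ~~ (x i == v)) p x by rewrite /S (bigID (fun x : clean V L => x i == v)).
rewrite S0 => H; rewrite -(lerD2r (\sum_(x | consistent z x && ~~ (x i == v)) p x)) -H add0r.
by rewrite sumr_ge0.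
Qed.

Lemma jointE j : forall x z,
  q_tf_joint p g K j x z = p x * (if consistent z x then 1 else 0) * w j z.
Proof.
elim: j => [|j IH] x z /=.
  case: eqP => [->|_]; last by rewrite !mulr0.
  by rewrite cons_full !mulr1.
under eq_bigr do rewrite IH.
rewrite mulr_sumr; apply eq_bigr => z0 _.
rewrite !mulr_sumr; apply eq_bigr => i _.
rewrite [RHS](_ : _ = p x * w j z0 * g z0 (tgrid R K j) i *
   ((if consistent z x then 1 else 0) *
    \sum_v (if (z == replace z0 i v) && compat (z0 i) v then 1 else 0))); last first.
  move: (p x) (w j z0) (g _ _ _) (if consistent z x then _ else _) (\sum_v _) => a b c d e; ring.
rewrite -indE.
move: (p x) (w j z0) (g _ _ _) (if consistent z0 x then _ else _) (if z == _ then _ else _) => a b c d e; ring.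
Qed.

Lemma idealE j : is_distribution p -> forall z, q_ideal p g K j z = S z * w j z.
Proof.
move=> [p0 p1]; elim: j => [|j IH] z /=.
  case: eqP => [->|_]; last by rewrite !mulr0.
  rewrite mulr1 /S (eq_bigl xpredT) //; by move=> x; rewrite cons_full.
under eq_bigr do rewrite IH.
rewrite mulr_sumr; apply eq_bigr => z0 _.
rewrite -mulrA mulrCA [S z * _]mulrCA; congr (_ * _).
rewrite !mulr_sumr; apply eq_bigr => i _.
rewrite mulrCA [S z * _]mulrCA; congr (_ * _).
rewrite !mulr_sumr; apply eq_bigr => v _.
rewrite mulrA postE //.
case E: (z == replace z0 i v); last by rewrite !mulr0.
rewrite -(eqP E) /=; case: (compat (z0 i) v); by rewrite ?mul1r ?mul0r ?mulr1 ?mulr0.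
Qed.

End Proof.

Theorem proposition1 (R : realFieldType) (V : finType) (L : nat)
  (p : {ffun clean V L -> R}) (g : state V L -> R -> 'I_L -> R) (K : nat) :
  (1 <= L)%N -> (1 <= K)%N -> (K <= L)%N ->
  is_distribution p -> is_policy g ->
  forall j : nat, (j <= K)%N ->
    forall z : state V L, q_ideal p g K j z = q_tf p g K j z.
Proof.
move=> _ _ _ Hp _ j _ z.
rewrite (@idealE _ _ _ p g K j Hp) /q_tf.
under eq_bigr do rewrite jointE.
rewrite -mulr_suml; congr (_ * _).
rewrite /S big_mkcond; apply eq_bigr => x _.
by case: (consistent z x); rewrite ?mulr1 ?mulr0.
Qed.
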